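(* Let $P$ be any transition matrix on the finite set $S$ for which $\pi$ is a stationary distribution, i.e. $\pi(y)=\sum_x\pi(x)P(x,y)$ for all $y$. Let $\pi_{\max}=\max_x\pi(x)$. Then $\mathrm{trace}(P)=\sum_x P(x,x)\ge\max\big(0,(2\pi_{\max}-1)/\pi_{\max}\big)$. Furthermore, any $P$ attaining this minimum value has at most one non-zero diagonal entry, and any such non-zero diagonal entry is $P(x^*,x^* )$ for a state $x^*$ with $\pi(x^* )=\pi_{\max}>1/2$.
   Context: $S$ is a finite set, and $\pi$ is a probability distribution on $S$ with $\pi(x)>0$ for all $x$. A transition matrix has nonnegative entries with rows summing to $1$. *)

(* Defs.v *)
From mathcomp Require Import all_boot all_order all_algebra.
Set Implicit Arguments. Unset Strict Implicit. Unset Printing Implicit Defensive.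
Import Order.TTheory GRing.Theory Num.Theory.
Local Open Scope ring_scope.

Definition is_distr (R : realFieldType) (S : finType) (pi : S -> R) : Prop :=
  (forall x, 0 < pi x) /\ \sum_x pi x = 1.

Definition is_transition (R : realFieldType) (S : finType) (P : S -> S -> R) : Prop :=
  (forall x y, 0 <= P x y) /\ (forall x, \sum_y P x y = 1).

Definition is_stationary (R : realFieldType) (S : finType) (pi : S -> R)
  (P : S -> S -> R) : Prop :=
  forall y, pi y = \sum_x pi x * P x y.

(* pi_max = max_x pi(x) (pi is positive, so 0 is a harmless start value) *)
Definition pi_max (R : realFieldType) (S : finType) (pi : S -> R) : R :=
  \big[Num.max/0]_x pi x.

Definition trace (R : realFieldType) (S : finType) (P : S -> S -> R) : R :=
  \sum_x P x x.

(* Main.v *)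
Require Import Defs.
From mathcomp Require Import all_boot all_order all_algebra.
From mathcomp Require Import lra.
Import Order.TTheory GRing.Theory Num.Theory.
Local Open Scope ring_scope.

Theorem lemma4 (R : realFieldType) (S : finType) (pi : S -> R) (P : S -> S -> R) :
  is_distr pi -> is_transition P -> is_stationary pi P ->
  Num.max 0 ((2 * pi_max pi - 1) / pi_max pi) <= trace P /\
  (trace P = Num.max 0 ((2 * pi_max pi - 1) / pi_max pi) ->
     (forall x y, P x x != 0 -> P y y != 0 -> x = y) /\
     (forall x, P x x != 0 -> pi x = pi_max pi /\ 1 / 2 < pi_max pi)).
Proof.
move=> [pipos pisum] [P0 P1] stat.
have [z _] : exists z : S, true.
  case: (pickP (fun _ : S => true)) => [z _|h]; first by exists z.
  by move: pisum; rewrite big_pred0 // => /eqP; rewrite eq_sym oner_eq0.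
have [xs _ Hm] := @eq_bigmax _ _ S (0:R) z predT pi isT (fun i _ => ltW (pipos i)).
rewrite /pi_max Hm.
set m := pi xs.
have mpos : 0 < m := pipos xs.
have le_m : forall x, pi x <= m.
  move=> x; rewrite /m -Hm; exact: (le_bigmax (0:R) pi x).
have Ple1 : forall x y, P x y <= 1.
  move=> x y; rewrite -(P1 x) (bigD1 y) //= lerDl; apply: sumr_ge0 => i _; exact: P0.
have key : (2 * m - 1) / m <= P xs xs.
  rewrite ler_pdivrMr // mulrC.
  have e1 : m = m * P xs xs + \sum_(x | x != xs) pi x * P x xs.
    by rewrite {1}/m stat (bigD1 xs).
  have e2 : \sum_(x | x != xs) pi x * P x xs <= 1 - m.
    have -> : 1 - m = \sum_(x | x != xs) pi x.
      by rewrite -pisum (bigD1 xs) //= /m addrAC subrr add0r.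
    apply: ler_sum => x _; rewrite -{2}(mulr1 (pi x)).
    by apply: ler_wpM2l; [exact: ltW | exact: Ple1].
  lra.
have trsplit : trace P = P xs xs + \sum_(x | x != xs) P x x.
  by rewrite /trace (bigD1 xs).
have others : 0 <= \sum_(x | x != xs) P x x by apply: sumr_ge0 => x _; exact: P0.
have trge : P xs xs <= trace P by rewrite trsplit lerDl.
split.
  rewrite ge_max; apply/andP; split.
    by rewrite /trace; apply: sumr_ge0 => x _; exact: P0.
  exact: le_trans key trge.
move=> Heq.
have only : forall x, P x x != 0 -> x = xs /\ 1/2 < m.
  move=> x Hx.
  have Hxp : 0 < P x x by rewrite lt_def Hx P0.
  have trpos : 0 < trace P.
    rewrite /trace (bigD1 x) //=; apply: ltr_wpDr => //.
    by apply: sumr_ge0 => i _; exact: P0.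
  have Hc : trace P = (2 * m - 1) / m.
    move: Heq; rewrite /Num.max; case: ifP => // _ h.
    by move: trpos; rewrite h ltxx.
  have hm : 1 / 2 < m.
    have h1 : 0 < (2 * m - 1) / m by rewrite -Hc.
    have : 0 < (2 * m - 1) by move: h1; rewrite pmulr_lgt0 // invr_gt0.
    lra.
  split => //.
  case: (eqVneq x xs) => // hne.
  have s0 : \sum_(x | x != xs) P x x = 0 by lra.
  have : \sum_(i | i != xs) P i i >= P x x.
    rewrite (bigD1 x) //= lerDl; apply: sumr_ge0 => i _; exact: P0.
  rewrite s0 => h; move: Hxp; rewrite ltNge h //.
split.
  by move=> x y hx hy; rewrite (proj1 (only x hx)) (proj1 (only y hy)).
by move=> x hx; have [-> h] := only x hx.
Qed.
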